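(* Let $r\ge2$ and let $\mathbf L^{\mathrm{MAP}}\in\mathbb R_+^{(2^r-1)\times r!}$ be the matrix with rows indexed by $\mathbf y\in\{0,1\}^r\setminus\{\mathbf 0\}$, columns indexed by $\sigma\in\Pi_r$, and entries \[ \ell^{\mathrm{MAP}}(\mathbf y,\sigma)=1-\frac{1}{\|\mathbf y\|_1}\sum_{i:\,y_i=1}\frac{1}{\sigma(i)}\sum_{j=1}^{\sigma(i)}y_{\sigma^{-1}(j)} . \] Then $\operatorname{rank}(\mathbf L^{\mathrm{MAP}})\ge\frac{r(r-1)}{2}-2$.
   Context: $\Pi_r$ is the set of all permutations (bijections) $\sigma:[r]\to[r]$, where $[r]=\{1,\dots,r\}$ and $\sigma(i)$ is the position of element $i$; $\sigma^{-1}(j)$ is the element placed at position $j$. $\|\mathbf y\|_1=\sum_i|y_i|$. Equivalently, $\ell^{\mathrm{MAP}}(\mathbf y,\sigma)=1-\frac{1}{\|\mathbf y\|_1}\sum_{i=1}^r\sum_{j=1}^{i}\frac{y_iy_j}{\max(\sigma(i),\sigma(j))}$. *)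

(* Defs.v *)
From HB Require Import structures.
From mathcomp Require Import all_boot all_order all_algebra all_fingroup.
Set Implicit Arguments. Unset Strict Implicit. Unset Printing Implicit Defensive.
Import Order.TTheory GRing.Theory Num.Theory.
Local Open Scope ring_scope.

(* Row index set: nonzero y in {0,1}^r, encoded as the nonempty subsets
   {i | y_i = 1} of 'I_r. *)
Definition nzY (r : nat) : {set {set 'I_r}} := [set y : {set 'I_r} | y != set0].

(* A permutation s : {perm 'I_r}; the (1-based) position of element i is
   sigma(i) = s i + 1, and the element at (0-based) position k is s^-1 k. *)
Definition lMAP (R : realFieldType) (r : nat) (y : {set 'I_r}) (s : {perm 'I_r}) : R :=
  1 - (#|y|%:R)^-1 *
      \sum_(i in y) ((s i).+1%:R)^-1 *
        \sum_(k : 'I_r | (k <= s i)%N) ((((s^-1)%g k) \in y) : nat)%:R.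

(* The (2^r - 1) x r! matrix; rows/columns enumerated via enum_val
   (the rank does not depend on the chosen enumeration). *)
Definition LMAP (R : realFieldType) (r : nat) : 'M[R]_(#|nzY r|, #|{perm 'I_r}|) :=
  \matrix_(a, b) lMAP R (enum_val a) (enum_val b).

(* Main.v *)
Require Import Defs.
From HB Require Import structures.
From mathcomp Require Import all_boot all_order all_algebra all_fingroup.
From mathcomp Require Import ring lra zify.
Set Implicit Arguments. Unset Strict Implicit. Unset Printing Implicit Defensive.
Import Order.TTheory GRing.Theory Num.Theory.
Local Open Scope ring_scope.

Lemma cnt (R : realFieldType) r (s : {perm 'I_r}) (a : 'I_r) (p : nat) :
  \sum_(k : 'I_r | (k <= p)%N) ((((s^-1)%g k) == a) : nat)%:R = ((s a <= p)%N : nat)%:R :> R.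
Proof.
rewrite (eq_bigr (fun k => ((k == s a) : nat)%:R)); last first.
  move=> k _; congr (_ %:R); congr nat_of_bool.
  apply/eqP/eqP => [<-|->]; by rewrite ?permKV ?permK.
case: (leqP (s a) p) => h.
  rewrite (bigD1 (s a)) //= eqxx big1 ?addr0 // => k /andP[_ nk].
  by rewrite (negbTE nk).
rewrite big1 // => k hk; case: eqP => // e; move: hk; rewrite e; lia.
Qed.

Lemma lMAP1 (R : realFieldType) r (s : {perm 'I_r}) (a : 'I_r) :
  lMAP R [set a] s = 1 - ((s a).+1%:R)^-1.
Proof.
rewrite /lMAP cards1 invr1 mul1r big_set1.
under eq_bigr do rewrite in_set1.
by rewrite cnt leqnn mulr1.
Qed.

Lemma lMAP2 (R : realFieldType) r (s : {perm 'I_r}) (a b : 'I_r) : a != b ->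
  lMAP R [set a; b] s = 1 - (2%:R)^-1 *
    (((s a).+1%:R)^-1 * (1 + ((s b <= s a)%N : nat)%:R) +
     ((s b).+1%:R)^-1 * (((s a <= s b)%N : nat)%:R + 1)).
Proof.
move=> ab.
have E : forall p : nat, \sum_(k : 'I_r | (k <= p)%N) (((((s^-1)%g k) \in [set a; b])) : nat)%:R
   = ((s a <= p)%N : nat)%:R + ((s b <= p)%N : nat)%:R :> R.
  move=> p; rewrite -!cnt -big_split /=; apply: eq_bigr => k _.
  rewrite in_set2; set x := (s^-1)%g k; clearbody x.
  case ea: (x == a); case eb: (x == b) => //=; rewrite ?addr0 ?add0r //.
  by move/eqP: ea => ea; move/eqP: eb => eb; rewrite -ea -eb eqxx in ab.
rewrite /lMAP cards2 ab big_setU1 ?inE //= big_set1 !E leqnn.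
by rewrite leqnn.
Qed.

Definition Bc (R : realFieldType) r (y z : {set 'I_r}) : R :=
  if z == y then -2 else if z \subset y then 1 else 0.

Definition g (R : realFieldType) r (y : {set 'I_r}) (s : {perm 'I_r}) : R :=
  (((\max_(x in y) (s x : nat))%N).+1%:R)^-1.

Lemma g2 (R : realFieldType) r (a b : 'I_r) (s : {perm 'I_r}) : a != b ->
  g R [set a; b] s = ((maxn (s a) (s b)).+1%:R)^-1.
Proof.
by move=> ab; rewrite /g big_setU1 ?big_set1 /= ?inE.
Qed.

Lemma sub2 r (a b : 'I_r) (z : {set 'I_r}) : z \subset [set a; b] -> z != set0 ->
  [\/ z = [set a], z = [set b] | z = [set a; b]].
Proof.
move=> h nz.
have H : forall c d : 'I_r, z \subset [set c; d] -> d \notin z -> z = [set c] \/ z = set0.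
  move=> c d h' nd; have : z \subset [set c].
    apply/subsetP => x xz; have := subsetP h' x xz; rewrite !inE.
    case/orP => // /eqP e; by rewrite -e xz in nd.
  by rewrite subset1 => /orP[/eqP->|/eqP->]; [left|right].
case az: (a \in z); case bz: (b \in z).
- apply: Or33; apply/eqP; rewrite eqEsubset h /= subUset !sub1set az bz //.
- case: (H a b h (negbT bz)) => e; first by apply: Or31.
  by rewrite e eqxx in nz.
- rewrite setUC in h; case: (H b a h (negbT az)) => e; first by apply: Or32.
  by rewrite e eqxx in nz.
- case: (H a b h (negbT bz)) => e; last by rewrite e eqxx in nz.
  by rewrite e set11 in az.
Qed.

Lemma arith1 (R : realFieldType) (x y : R) :
  -2 * (1 - 2^-1 * (x * (1 + 0) + y * (1 + 1))) + (1 * (1 - x) + 1 * (1 - y)) = y.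
Proof. field. all: by rewrite ?pnatr_eq0. Qed.

Lemma arith2 (R : realFieldType) (x y : R) :
  -2 * (1 - 2^-1 * (x * (1 + 1) + y * (0 + 1))) + (1 * (1 - x) + 1 * (1 - y)) = x.
Proof. field. all: by rewrite ?pnatr_eq0. Qed.

Lemma key (R : realFieldType) r (a b : 'I_r) (s : {perm 'I_r}) : a != b ->
  \sum_(z in nzY r) Bc R [set a; b] z * lMAP R z s = g R [set a; b] s.
Proof.
move=> ab.
have nA : [set a] != [set a; b].
  apply/eqP => e; have : b \in [set a] by rewrite e set22.
  by rewrite in_set1 eq_sym (negbTE ab).
have nB : [set b] != [set a; b].
  apply/eqP => e; have : a \in [set b] by rewrite e set21.
  by rewrite in_set1 (negbTE ab).
have nAB : [set b] != [set a].
  apply/eqP => e; have : a \in [set b] by rewrite e set11.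
  by rewrite in_set1 (negbTE ab).
have inY : forall z : {set 'I_r}, z != set0 -> z \in nzY r by move=> z; rewrite inE.
rewrite (bigD1 [set a; b]) ?inY //=; last by apply/set0Pn; exists a; rewrite set21.
rewrite (bigD1 [set a]) ?inY /= ?nA //=; last by apply/set0Pn; exists a; rewrite set11.
rewrite (bigD1 [set b]) ?inY /= ?nB ?nAB //=; last by apply/set0Pn; exists b; rewrite set11.
rewrite big1 ?addr0; last first.
  move=> z /andP[/andP[/andP[zY zn1] zn2] zn3].
  rewrite /Bc (negbTE zn1); case: ifP => hs; last by rewrite mul0r.
  rewrite inE in zY; case: (sub2 hs zY) => e; by rewrite e eqxx in zn2 zn3 zn1.
rewrite /Bc eqxx (negbTE nA) (negbTE nB) !sub1set set21 set22.
rewrite lMAP2 // !lMAP1 g2 //.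
have sab : (s a != s b) by rewrite (inj_eq perm_inj).
case: (ltngtP (s a) (s b)) => h; last by move: sab; rewrite -val_eqE /= h eqxx.
- exact: arith1.
- exact: arith2.
Qed.

Definition tn (u : nat) : nat := if u == 1%N then 2%N else if u == 2%N then 1%N else u.

Lemma tpval r (p1 p2 u : 'I_r) : val p1 = 1%N -> val p2 = 2%N ->
  nat_of_ord (tperm p1 p2 u) = tn (nat_of_ord u).
Proof.
move=> h1 h2; rewrite /tn; case: tpermP => [->|->|n1 n2].
- by rewrite h1 h2.
- by rewrite h1 h2.
- have : val u != val p1 by apply/negP => /eqP /val_inj.
  have : val u != val p2 by apply/negP => /eqP /val_inj.
  rewrite h1 h2; move=> /negbTE -> /negbTE -> //.
Qed.

Lemma tmax (u w : nat) : u != w ->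
  ~ (u = 0%N /\ (w = 1%N \/ w = 2%N)) -> ~ (w = 0%N /\ (u = 1%N \/ u = 2%N)) ->
  maxn (tn u) (tn w) = maxn u w.
Proof.
rewrite /tn => h1 h2 h3.
have [e1|e1] := eqVneq u 1%N; have [e2|e2] := eqVneq w 1%N;
have [e3|e3] := eqVneq u 2%N; have [e4|e4] := eqVneq w 2%N;
rewrite ?e1 ?e2 ?e3 ?e4 ?(negbTE e1) ?(negbTE e2) ?(negbTE e3) ?(negbTE e4) /=;
move: h1 h2 h3 e1 e2 e3 e4; rewrite ?eqxx; lia.
Qed.

Lemma exists_perm r (a b c : 'I_r) : a != b -> a != c -> b != c ->
  exists p1 p2 : 'I_r, exists s : {perm 'I_r},
   [/\ val p1 = 1%N, val p2 = 2%N, nat_of_ord (s c) = 0%N, nat_of_ord (s a) = 1%N & nat_of_ord (s b) = 2%N].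
Proof.
move=> ab ac bc.
have hr : (2 < r)%N.
  have := ltn_ord a; have := ltn_ord b; have := ltn_ord c.
  move: ab ac bc; rewrite -!val_eqE /=; lia.
pose p0 := Ordinal (ltn_trans (isT : (0 < 2)%N) hr).
pose p1 := Ordinal (ltn_trans (isT : (1 < 2)%N) hr).
pose p2 := Ordinal hr.
have n01 : p0 != p1 by [].
have n02 : p0 != p2 by [].
have n12 : p1 != p2 by [].
exists p1, p2.
pose u1 := tperm c p0.
pose u2 := tperm (u1 a) p1.
pose u3 := tperm (u2 (u1 b)) p2.
exists (u1 * u2 * u3)%g; rewrite !permM.
have e1 : u1 c = p0 by rewrite tpermL.
have a1 : u1 a != p0 by rewrite -e1 (inj_eq perm_inj).
have b1 : u1 b != p0 by rewrite -e1 (inj_eq perm_inj).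
have e2 : u2 p0 = p0 by rewrite tpermD // eq_sym.
have e2a : u2 (u1 a) = p1 by rewrite tpermL.
have b2 : u2 (u1 b) != p0 by rewrite -e2 (inj_eq perm_inj).
have b2' : u2 (u1 b) != p1 by rewrite -e2a !(inj_eq perm_inj) eq_sym.
split => //.
- by rewrite e1 e2 tpermD // eq_sym.
- by rewrite e2a tpermD // eq_sym.
- by rewrite tpermL.
Qed.

Definition P r : {set {set 'I_r}} := [set y : {set 'I_r} | #|y| == 2%N].
Definition Gm (R : realFieldType) r : 'M[R]_(#|P r|, #|{perm 'I_r}|) :=
  \matrix_(i, j) g R (enum_val i) (enum_val j).
Definition Bm (R : realFieldType) r : 'M[R]_(#|P r|, #|nzY r|) :=
  \matrix_(i, k) Bc R (enum_val i) (enum_val k).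

Lemma GmE (R : realFieldType) r : Gm R r = Bm R r *m LMAP R r.
Proof.
apply/matrixP => i j; rewrite !mxE.
under eq_bigr do rewrite !mxE.
rewrite -(big_enum_val (fun z => Bc R (enum_val i) z * lMAP R z (enum_val j))) /=.
have := enum_valP i; rewrite inE => /cards2P [a [b [ab e]]].
by rewrite e key.
Qed.

Lemma bin2E n : (2 * 'C(n, 2) = n * (n - 1))%N.
Proof.
elim: n => // n IH; rewrite binS bin1 mulnDr IH; nia.
Qed.

Lemma Ginj (R : realFieldType) r (v : 'rV[R]_#|P r|) : v *m Gm R r = 0 -> v = 0.
Proof.
move=> hv.
have H : forall s, \sum_i v 0 i * g R (enum_val i) s = 0.
  move=> s; move/rowP: hv => /(_ (enum_rank s)); rewrite !mxE.
  by under eq_bigr do rewrite mxE enum_rankK.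
apply/rowP => i0; rewrite mxE.
pose w y := v 0 (enum_rank_in (enum_valP i0) y).
have wE : forall i, w (enum_val i) = v 0 i by move=> i; rewrite /w enum_valK_in.
have H' : forall s, \sum_(y in P r) w y * g R y s = 0.
  move=> s; rewrite (big_enum_val (fun y => w y * g R y s)) /=.
  under eq_bigr do rewrite wE.
  exact: H.
have inP : forall a b : 'I_r, a != b -> [set a; b] \in P r.
  by move=> a b ab; rewrite inE cards2 ab.
have sw : forall a b c : 'I_r, a != b -> a != c -> b != c -> w [set c; a] = w [set c; b].
  move=> a b c ab ac bc.
  have [p1 [p2 [s [h1 h2 hc ha hb]]]] := exists_perm ab ac bc.
  have vs : forall x y, nat_of_ord (s x) = nat_of_ord (s y) -> x = y by move=> x y /val_inj /perm_inj.
  pose s' := (s * tperm p1 p2)%g.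
  have D : \sum_(y in P r) w y * (g R y s - g R y s') = 0.
    by under eq_bigr do rewrite mulrBr; rewrite sumrB !H' subrr.
  move: D.
  have nab : [set c; b] != [set c; a].
    apply/eqP => e; have : b \in [set c; a] by rewrite -e set22.
    by rewrite in_set2 (negbTE bc) eq_sym (negbTE ab).
  rewrite (bigD1 [set c; a]) ?inP 1?eq_sym //= (bigD1 [set c; b]) /=; last first.
    by rewrite inP ?nab // eq_sym.
  rewrite big1 ?addr0; last first.
    move=> y /andP[/andP[yP y1] y2].
    move: (yP); rewrite inE => /cards2P [x [z [xz e]]].
    rewrite e !g2 // /s' !permM !tpval // tmax ?subrr ?mulr0 //.
    + by apply/negP => /eqP /vs /eqP; rewrite (negbTE xz).
    + move=> [hx [hz|hz]].
      * have ex : x = c by apply: vs; rewrite hx hc.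
        have ez : z = a by apply: vs; rewrite hz ha.
        by move: y1; rewrite e ex ez eqxx.
      * have ex : x = c by apply: vs; rewrite hx hc.
        have ez : z = b by apply: vs; rewrite hz hb.
        by move: y2; rewrite e ex ez eqxx.
    + move=> [hz [hx|hx]].
      * have ez : z = c by apply: vs; rewrite hz hc.
        have ex : x = a by apply: vs; rewrite hx ha.
        by move: y1; rewrite e ex ez setUC eqxx.
      * have ez : z = c by apply: vs; rewrite hz hc.
        have ex : x = b by apply: vs; rewrite hx hb.
        by move: y2; rewrite e ex ez setUC eqxx.
  rewrite !g2 1?eq_sym // /s' !permM !tpval // hc ha hb /=.
  rewrite (_ : maxn 0 1 = 1)%N // (_ : maxn 0 2 = 2)%N // => E.
  have : (w [set c; a] - w [set c; b]) * ((2%:R)^-1 - (3%:R)^-1) = 0.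
    by rewrite -[RHS]E; ring.
  move/eqP; rewrite mulf_eq0 => /orP [/eqP|]; first by move/eqP; rewrite subr_eq0 => /eqP.
  by rewrite subr_eq0 (inj_eq (@invr_inj _)) eqr_nat.
have S1 : forall a b d : 'I_r, a != b -> a != d -> w [set a; b] = w [set a; d].
  move=> a b d ab ad; have [<-//|bd] := eqVneq b d.
  by apply: sw => //; rewrite eq_sym.
have allw : forall a b c d : 'I_r, a != b -> c != d -> w [set a; b] = w [set c; d].
  move=> a b c d ab cd; have [ca|ca] := eqVneq c a.
    by rewrite ca; apply: S1 => //; rewrite -ca.
  have ac : a != c by rewrite eq_sym.
  rewrite (S1 a b c) // [[set a; c]]setUC; apply: S1 => //.
have := enum_valP i0; rewrite inE => /cards2P [a0 [b0 [ab0 e0]]].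
have wc : forall y, y \in P r -> w y = v 0 i0.
  move=> y; rewrite inE => /cards2P [x [z [xz ->]]].
  by rewrite -wE e0; apply: allw.
have := H' 1%g; under eq_bigr => y yP do rewrite wc //.
rewrite -mulr_sumr => /eqP; rewrite mulf_eq0 => /orP [/eqP //|/eqP hs].
have g0 : forall y, y \in P r -> 0 <= g R y 1%g by move=> y _; rewrite invr_ge0 ler0n.
have := psumr_eq0P g0 hs (enum_valP i0).
by move/eqP; rewrite invr_eq0 pnatr_eq0.
Qed.

Local Close Scope ring_scope.

Theorem mainTheorem17 (R : realFieldType) (r : nat) (hr : (2 <= r)%N) :
  (r * (r - 1) <= 2 * (\rank (LMAP R r) + 2))%N.
Proof.
have h1 : (\rank (Gm R r) <= \rank (LMAP R r))%N by rewrite GmE mxrankM_maxr.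
have h2 : \rank (Gm R r) = #|P r|.
  by apply/eqP; apply: inj_row_free; apply: Ginj.
have h3 : #|P r| = 'C(r, 2).
  by rewrite /P card_draws card_ord.
have := bin2E r; rewrite -h3 -h2; lia.
Qed.
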